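(* Let $\mathcal{S}$ be a normal SPN over Boolean variables $X_1,\ldots,X_N$ and let $\mathcal{B}$, $\mathcal{A}_H$, $\mathcal{A}_X$ be the Bayesian network and ADDs constructed from $\mathcal{S}$ as described in the context. Then these ADDs encode local CPDs at each node of $\mathcal{B}$: for each hidden variable $H_v$, $\mathcal{A}_{H_v}$ is a probability distribution over the values of $H_v$; and for each observable variable $X$, every hidden variable labelling a node of $\mathcal{A}_X$ is a parent of $X$ in $\mathcal{B}$, and for every joint assignment $\mathbf{h}$ of the parents of $X$, following $\mathcal{A}_X$ from its root according to $\mathbf{h}$ leads to a terminal node which is a probability distribution over $X$; thus $\mathcal{A}_X$ represents a conditional distribution $\Pr(X\mid \mathrm{Pa}(X))$.
   Context: SPNs. Let $X_1,\ldots,X_N$ be Boolean variables. An SPN is a finite rooted DAG whose internal nodes are sum and product nodes, each edge $(v,u)$ out of a sum node carrying a weight $w_{v,u}\ge 0$, and whose terminal nodes are indicators $\mathbb{I}_{x_n},\mathbb{I}_{\bar x_n}$ or univariate distribution nodes over some $X_n$ with parameter $p\in[0,1]$ (value $p\mathbb{I}_{x_n}+(1-p)\mathbb{I}_{\bar x_n}$); products multiply, sum nodes take $\sum_u w_{v,u}\mathrm{val}(u)$, and $f_{\mathcal{S}}(\mathbf{x})$ is the root value with $\Pr_{\mathcal{S}}(\mathbf{x})=f_{\mathcal{S}}(\mathbf{x})/\sum_{\mathbf{x}'}f_{\mathcal{S}}(\mathbf{x}')$. The scope of a terminal node over $X_n$ is $\{X_n\}$; an internal node's scope is the union of its children's scopes.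 The SPN is over $X_1,\ldots,X_N$ if the root's scope is $\{X_1,\ldots,X_N\}$. It is normal if (1) it is complete (children of each sum node have equal scopes) and decomposable (children of each product node have pairwise disjoint scopes); (2) the weights leaving each sum node are nonnegative and sum to 1; (3) every terminal node is a univariate distribution node and every sum node has scope size at least 2. Construction. From a normal SPN $\mathcal{S}$ over $X_1,\ldots,X_N$ build a Bayesian network $\mathcal{B}$: its variables are the observable variables $X_1,\ldots,X_N$ and, for each sum node $v$ with children $u_1,\ldots,u_l$, a hidden variable $H_v$ with values $\{1,\ldots,l\}$; its edges are exactly $H_v\to X$ for each sum node $v$ and each $X\in\mathrm{scope}(v)$. The CPD of $H_v$ is the ADD (decision stump) $\mathcal{A}_{H_v}$ with root labelled $H_v$ whose $i$-th edge leads to a terminal with value $w_{v,u_i}$, i.e. $\Pr(H_v=i)=w_{v,u_i}$. The CPD of $X$ is the ADD $\mathcal{A}_X$ obtained by taking the subgraph of $\mathcal{S}$ induced by the nodes whose scope contains $X$ (in which each product node has exactly one child, by decomposability), contracting every product node (connecting each of its parents to its unique child and deleting it; if it is the root, its child becomes the root), turning each sum node $v$ into an ADD node labelled $H_v$ whose $i$-th out-edge goes to the image of its $i$-th child $u_i$, and keeping each terminal node (a univariate distribution over $X$) as an ADD terminal carrying that distribution. An ADD is a rooted DAG with internal nodes labelled by variables, a node labelled $Y$ having one out-edge per value of $Y$, evaluated by following edges according to an assignment. *)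

(* Defs.v *)
From mathcomp Require Import all_boot all_order all_algebra.
Unset Strict Implicit. Unset Printing Implicit Defensive.
Import Order.TTheory GRing.Theory Num.Theory.
Local Open Scope ring_scope.

(* Kind of a node: sum, product, indicator I_{x_n} (true) / I_{~x_n} (false),
   or univariate distribution node over X_n with parameter p. *)
Inductive spn_kind (N : nat) (R : Type) :=
| SumN | ProdN | IndN of 'I_N & bool | DistN of 'I_N & R.
Arguments SumN {N R}. Arguments ProdN {N R}. Arguments IndN {N R} _ _. Arguments DistN {N R} _ _.

(* A finite rooted graph: nodes, kinds, ordered children (the i-th child of a sum
   node is u_i), weight sw v i of the i-th out-edge of v, and a root. *)
Record spn (N : nat) (R : Type) := SPN {
  snode : finType;
  skind : snode -> spn_kind N R;
  sch : snode -> seq snode;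
  sw : snode -> nat -> R;
  sroot : snode }.
Arguments snode {N R} s. Arguments skind {N R} s _. Arguments sch {N R} s _.
Arguments sw {N R} s _ _. Arguments sroot {N R} s.

Definition is_sum {N R} (k : spn_kind N R) := if k is SumN then true else false.
Definition is_prod {N R} (k : spn_kind N R) := if k is ProdN then true else false.
Definition is_terminal {N R} (k : spn_kind N R) :=
  match k with IndN _ _ | DistN _ _ => true | _ => false end.
Definition term_var {N R} (k : spn_kind N R) : option 'I_N :=
  match k with IndN n _ => Some n | DistN n _ => Some n | _ => None end.

Definition sedge {N R} (S : spn N R) : rel (snode S) := fun u v => v \in sch S u.

(* scope of a node: the variables of the terminal nodes below it
   (= union of the children's scopes, unfolded on the finite DAG) *)
Definition scope {N R} (S : spn N R) (v : snode S) : {set 'I_N} :=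
  [set n | [exists t, connect (sedge S) v t && (term_var (skind S t) == Some n)]].

Definition spn_wf {N} {R : numDomainType} (S : spn N R) : Prop :=
  [/\ (forall u v, sedge S u v -> ~~ connect (sedge S) v u),
      (forall v, connect (sedge S) (sroot S) v),
      (forall t, is_terminal (skind S t) -> sch S t = [::]) &
      (forall t n p, skind S t = DistN n p -> 0 <= p <= 1)].

Definition spn_over {N R} (S : spn N R) : Prop := scope S (sroot S) = [set: 'I_N].

Definition complete {N R} (S : spn N R) : Prop :=
  forall v, is_sum (skind S v) -> forall u1 u2,
    u1 \in sch S v -> u2 \in sch S v -> scope S u1 = scope S u2.

Definition decomposable {N R} (S : spn N R) : Prop :=
  forall v, is_prod (skind S v) -> forall i j,
    (i < size (sch S v))%N -> (j < size (sch S v))%N -> i != j ->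
    [disjoint scope S (nth v (sch S v) i) & scope S (nth v (sch S v) j)].

Definition normal {N} {R : numDomainType} (S : spn N R) : Prop :=
  [/\ complete S, decomposable S,
      (forall v, is_sum (skind S v) ->
         (forall i, (i < size (sch S v))%N -> 0 <= sw S v i) /\
         \sum_(i < size (sch S v)) sw S v i = 1),
      (forall t n b, skind S t <> IndN n b) &
      (forall v, is_sum (skind S v) -> (2 <= #|scope S v|)%N)].

(* Internal nodes are labelled (alab a = Some Y) and have ordered out-edges
   (the i-th for value i of Y); terminal nodes (alab a = None) carry data aterm. *)
Record add (L D : Type) := ADD {
  anode : finType;
  alab : anode -> option L;
  asucc : anode -> seq anode;
  aterm : anode -> option D;
  aroot : option anode }.
Arguments anode {L D} a. Arguments alab {L D a} _. Arguments asucc {L D a} _.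
Arguments aterm {L D a} _. Arguments aroot {L D} a.

Definition add_step {L D} (A : add L D) (h : L -> nat) (a : anode A) : option (anode A) :=
  if alab a is Some y then onth (asucc a) (h y) else None.

Definition add_follow {L D} (A : add L D) (h : L -> nat) (k : nat) : option (anode A) :=
  iter k (fun o => obind (add_step A h) o) (aroot A).

Definition add_value {L} {R : numDomainType} (A : add L R) (h : L -> nat) (k : nat) : R :=
  odflt 0 (obind (@aterm L R A) (add_follow A h k)).

(* Hidden variable H_v is identified with the sum node v; its values {1..l} are
   encoded as 0..l-1 (position in sch S v). Edges: H_v -> X_n iff n in scope v. *)
Definition bn_parent {N R} (S : spn N R) (v : snode S) (n : 'I_N) : bool :=
  is_sum (skind S v) && (n \in scope S v).

(* CPD of H_v: decision stump; nodes: None (root, labelled H_v), Some i (terminal w_{v,u_i}) *)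
Definition add_H {N R} (S : spn N R) (v : snode S) : add (snode S) R :=
  @ADD (snode S) R (option 'I_(size (sch S v)))
    (fun a => if a is None then Some v else None)
    (fun a => if a is None then map Some (enum 'I_(size (sch S v))) else [::])
    (fun a => if a is Some i then Some (sw S v i) else None)
    (Some None).

(* CPD of X_n: induced subgraph on nodes whose scope contains X_n,
   product nodes contracted, sum nodes relabelled H_v, terminals kept. *)
Definition in_sub {N R} (S : spn N R) (n : 'I_N) (v : snode S) : bool := n \in scope S v.

Definition addX_pred {N R} (S : spn N R) (n : 'I_N) (v : snode S) : bool :=
  in_sub S n v && ~~ is_prod (skind S v).

Definition addX_node {N R} (S : spn N R) (n : 'I_N) := {v : snode S | addX_pred S n v}.

Fixpoint contr {N R} (S : spn N R) (n : 'I_N) (k : nat) (u : snode S) : snode S :=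
  match k with
  | 0 => u
  | k'.+1 =>
      if is_prod (skind S u) then
        if ohead [seq c <- sch S u | in_sub S n c] is Some c then contr S n k' c else u
      else u
  end.

Definition add_image {N R} (S : spn N R) (n : 'I_N) (u : snode S) : option (addX_node S n) :=
  insub (contr S n #|snode S| u).

Definition add_X {N R} (S : spn N R) (n : 'I_N) : add (snode S) ('I_N * R) :=
  @ADD (snode S) ('I_N * R) (addX_node S n)
    (fun a => if is_sum (skind S (val a)) then Some (val a) else None)
    (fun a => if is_sum (skind S (val a))
              then pmap (add_image S n) [seq c <- sch S (val a) | in_sub S n c]
              else [::])
    (fun a => if skind S (val a) is DistN m p then Some (m, p) else None)
    (add_image S n (sroot S)).

(* Main.v *)
Require Import Defs.
From mathcomp Require Import all_boot all_order all_algebra.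
Import Order.TTheory GRing.Theory Num.Theory.
Local Open Scope ring_scope.

Definition reach {N R} (S : spn N R) (x : snode S) : {set snode S} :=
  [set w | connect (sedge S) x w].

Lemma reach_lt {N} {R : numDomainType} (S : spn N R) (u c w : snode S) :
  spn_wf S -> sedge S u c -> connect (sedge S) c w -> (#|reach S w| < #|reach S u|)%N.
Proof.
case=> acyc _ _ _ euc ccw.
have uc : connect (sedge S) u c by exact: connect1.
apply: (@leq_trans #|reach S c|.+1).
  rewrite ltnS; apply: subset_leq_card; apply/subsetP=> x; rewrite !inE => wx.
  exact: connect_trans ccw wx.
apply: proper_card; apply/properP; split.
  apply/subsetP=> x; rewrite !inE => cx; exact: connect_trans uc cx.
by exists u; rewrite !inE ?connect0 //; apply: acyc.
Qed.

Lemma scope_child {N R} (S : spn N R) (v : snode S) (n : 'I_N) :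
  term_var (skind S v) = None -> n \in scope S v ->
  exists2 c, c \in sch S v & n \in scope S c.
Proof.
move=> tv; rewrite inE => /existsP [t /andP [/connectP [p pth ->] tn]].
case: p pth tn => [|c p] /=; first by rewrite tv.
case/andP=> vc pth tn; exists c => //.
by rewrite inE; apply/existsP; exists (last c p); rewrite tn andbT; apply/connectP; exists p.
Qed.

Lemma scope_edge {N R} (S : spn N R) (u c : snode S) (n : 'I_N) :
  sedge S u c -> n \in scope S c -> n \in scope S u.
Proof.
move=> uc; rewrite !inE => /existsP [t /andP [ct tn]].
by apply/existsP; exists t; rewrite tn andbT; apply: connect_trans (connect1 uc) ct.
Qed.

Lemma sum_children {N} {R : numDomainType} (S : spn N R) (v c : snode S) (n : 'I_N) :
  normal S -> is_sum (skind S v) -> n \in scope S v -> c \in sch S v -> n \in scope S c.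
Proof.
case=> cpl _ _ _ _ sv nv cv.
have tv : term_var (skind S v) = None by move: sv; case: (skind S v).
have [c0 c0v nc0] := @scope_child _ _ S v n tv nv.
by rewrite (cpl v sv c c0 cv c0v).
Qed.

Lemma term_scope {N} {R : numDomainType} (S : spn N R) (t : snode S) (n : 'I_N) :
  sch S t = [::] -> n \in scope S t -> term_var (skind S t) = Some n.
Proof.
move=> st; rewrite inE => /existsP [t' /andP [/connectP [p pth ->] /eqP tn]].
by case: p pth tn => [|c p] //=; rewrite /sedge st.
Qed.

Lemma ohead_mem {T : eqType} (s : seq T) c : ohead s = Some c -> c \in s.
Proof. by case: s => //= x s [->]; rewrite mem_head. Qed.

Lemma contr_props {N R} (S : spn N R) (n : 'I_N) k (u : snode S) :
  in_sub S n u -> in_sub S n (contr S n k u) /\ connect (sedge S) u (contr S n k u).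
Proof.
elim: k u => [|k IH] u /= iu; first by rewrite connect0.
case: ifP => _; last by rewrite connect0.
case E: (ohead _) => [c|]; last by rewrite connect0.
have := ohead_mem _ _ E; rewrite mem_filter => /andP [ic cu].
have [i1 c1] := IH c ic; split => //.
exact: connect_trans (connect1 cu) c1.
Qed.

Lemma contr_nonprod {N} {R : numDomainType} (S : spn N R) (n : 'I_N) k (u : snode S) :
  spn_wf S -> in_sub S n u -> (#|reach S u| <= k)%N -> ~~ is_prod (skind S (contr S n k u)).
Proof.
move=> wf; elim: k u => [|k IH] u /= iu hk.
  by move: hk; rewrite leqn0 => /eqP/cards0_eq/setP/(_ u); rewrite !inE connect0.
case: ifP => pu //.
have tv : term_var (skind S u) = None by move: pu; case: (skind S u).
have [c0 c0u nc0] := @scope_child _ _ S u n tv iu.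
case E: [seq c <- sch S u | in_sub S n c] => [|c s] /=.
  by have := mem_filter (in_sub S n) c0 (sch S u); rewrite E /in_sub nc0 c0u.
have : c \in [seq c <- sch S u | in_sub S n c] by rewrite E mem_head.
rewrite mem_filter => /andP [ic cu].
apply: IH => //; rewrite -ltnS; apply: leq_trans hk.
exact: reach_lt wf cu (connect0 _ _).
by rewrite pu.
Qed.

Lemma image_some {N} {R : numDomainType} (S : spn N R) (n : 'I_N) (u : snode S) :
  spn_wf S -> in_sub S n u ->
  exists a, add_image S n u = Some a /\ val a = contr S n #|snode S| u.
Proof.
move=> wf iu; rewrite /add_image; case: insubP => [a _ va|]; first by exists a.
rewrite /addX_pred (contr_props S n #|snode S| u iu).1 /=.
by rewrite (@contr_nonprod _ _ S n _ u wf iu) // max_card.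
Qed.

Lemma image_val {N R} (S : spn N R) (n : 'I_N) (u : snode S) a :
  add_image S n u = Some a -> val a = contr S n #|snode S| u.
Proof. by rewrite /add_image; case: insubP => // a0 _ <- [<-]. Qed.
Arguments image_some {N R S n u}.
Arguments image_val {N R S n u a}.
Arguments sum_children {N R S v c n}.
Arguments reach_lt {N R S u c w}.

Lemma onth_some {T} (s : seq T) x0 i : (i < size s)%N -> onth s i = Some (nth x0 s i).
Proof. by elim: s i => [|x s IH] [|i] //= /IH. Qed.

Lemma onth_mapS {T} (s : seq T) k x : onth s k = Some x -> onth (map Some s) k = Some (Some x).
Proof. elim: s k => [|y s IH] [|k] //=; [by case=> -> | exact: IH]. Qed.

Lemma onth_map_enum m (i : 'I_m) : onth (map Some (enum 'I_m)) i = Some (Some i).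
Proof.
apply: onth_mapS.
have hi : (i < size (enum 'I_m))%N by rewrite size_enum_ord ltn_ord.
by rewrite (onth_some _ i _ hi) nth_ord_enum.
Qed.

Lemma succ_size {N} {R : numDomainType} (S : spn N R) (n : 'I_N) (y : snode S) :
  spn_wf S -> normal S -> is_sum (skind S y) -> in_sub S n y ->
  [seq c <- sch S y | in_sub S n c] = sch S y /\
  size (pmap (add_image S n) [seq c <- sch S y | in_sub S n c]) = size (sch S y).
Proof.
move=> wf nm sy iy.
have allin : all (in_sub S n) (sch S y).
  by apply/allP => c cy; apply: sum_children nm sy iy cy.
rewrite (all_filterP allin); split => //.
rewrite size_pmap -(count_predT (sch S y)); apply: eq_in_count => c cy.
by have [b [-> _]] := image_some wf (allP allin c cy).
Qed.

Arguments succ_size {N R S n y}.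

Lemma follow_term {N} {R : numDomainType} (S : spn N R) (n : 'I_N) (h : snode S -> nat) :
  spn_wf S -> normal S ->
  (forall v, bn_parent S v n -> (h v < size (sch S v))%N) ->
  forall m (a : addX_node S n), (#|reach S (val a)| <= m)%N ->
  exists k t, iter k (fun o => obind (add_step (add_X S n) h) o) (Some a) = Some t /\
    alab t = None /\
    exists p : R, aterm t = Some (n, p) /\ 0 <= p <= 1.
Proof.
move=> wf nm hh; elim=> [|m IH] a hm.
  by move: hm; rewrite leqn0 => /eqP/cards0_eq/setP/(_ (val a)); rewrite !inE connect0.
have /andP [ia npa] := valP a.
case sa: (is_sum (skind S (val a))); last first.
  exists 0%N, a; split => //; split; first by rewrite /= sa.
  have [_ _ tch dp] := wf. move: a hm ia npa sa => [y ay] /= _ ia npa sa.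
  move: npa sa; case E: (skind S y) => [| |m' b|m' p] //= _ _.
    by case: nm => _ _ _ /(_ y m' b).
  have ty : is_terminal (skind S y) by rewrite E.
  have := @term_scope _ _ S y n (tch _ ty) ia.
  rewrite E /= => -[->]; exists p; split => //; exact: dp E.
have [fE sz] := succ_size wf nm sa ia.
have hy : (h (val a) < size (sch S (val a)))%N by apply: hh; rewrite /bn_parent sa.
have hL : (h (val a) < size (pmap (add_image S n) [seq c <- sch S (val a) | in_sub S n c]))%N
  by rewrite sz.
set L := pmap (add_image S n) [seq c <- sch S (val a) | in_sub S n c] in hL *.
set a' := nth a L (h (val a)).
have : a' \in L by exact: mem_nth.
rewrite mem_pmap => /mapP [c]; rewrite mem_filter => /andP [ic cy] /esym ca.
have va := image_val ca.
have [_ cc] := contr_props S n #|snode S| c ic.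
have [k [t [Ht rest]]] : exists k t, iter k (fun o => obind (add_step (add_X S n) h) o) (Some a') = Some t /\
    alab t = None /\ exists p : R, aterm t = Some (n, p) /\ 0 <= p <= 1.
  apply: IH; rewrite -ltnS; apply: leq_trans hm; rewrite va.
  exact: reach_lt wf cy cc.
have step : add_step (add_X S n) h a = Some a'.
  have sa2 : is_sum (skind S (sval a)) = true := sa.
  rewrite /add_step /= sa2 /=.
  exact: (onth_some _ a _ hL).
exists k.+1, t; split => //.
by rewrite iterSr -[X in iter k _ X]/(add_step (add_X S n) h a) step.
Qed.

Arguments follow_term {N R S n h}.

Theorem lemma5 (R : realFieldType) (N : nat) (S : spn N R) :
  spn_wf S -> spn_over S -> normal S ->
  (* A_{H_v} is a probability distribution over the values of H_v *)
  (forall v : snode S, is_sum (skind S v) ->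
     (forall i : 'I_(size (sch S v)), exists t,
        add_follow (add_H S v) (fun _ => val i) 1 = Some t /\
        alab t = None /\ exists d, aterm t = Some d /\ 0 <= d) /\
     \sum_(i < size (sch S v)) add_value (add_H S v) (fun _ => val i) 1 = 1) /\
  (* A_X is a CPD Pr(X | Pa(X)) *)
  (forall n : 'I_N,
     (forall (a : anode (add_X S n)) (y : snode S), alab a = Some y ->
        bn_parent S y n /\ size (asucc a) = size (sch S y)) /\
     (forall h : snode S -> nat,
        (forall v, bn_parent S v n -> (h v < size (sch S v))%N) ->
        exists k t, add_follow (add_X S n) h k = Some t /\ alab t = None /\
          exists p : R, aterm t = Some (n, p) /\ 0 <= p <= 1)).
Proof.
move=> wf ov nm; split.
  move=> v sv.
  have [wpos wsum] := (let: And5 _ _ w _ _ := nm in w) v sv.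
  have key : forall i : 'I_(size (sch S v)),
      add_follow (add_H S v) (fun _ => val i) 1 = Some (Some i).
    move=> i; change (onth (map Some (enum 'I_(size (sch S v)))) (val i) = Some (Some i)).
    exact: onth_map_enum.
  split.
    move=> i; exists (Some i); rewrite key; split => //; split => //.
    by exists (sw S v i); split => //; apply: wpos.
  rewrite -wsum; apply: eq_bigr => i _.
  by rewrite /add_value key.
move=> n; split.
  move=> a y /=; case: ifP => // sa [<-].
  have /andP [ia _] := valP a.
  split; first by rewrite /bn_parent sa.
  exact: (succ_size wf nm sa ia).2.
move=> h hh.
have ir : in_sub S n (sroot S) by rewrite /in_sub ov inE.
have [a0 [r0 _]] := image_some wf ir.
have [k [t [Ht rest]]] := follow_term wf nm hh _ a0 (leqnn _).
by exists k, t; rewrite /add_follow /= r0.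
Qed.
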